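(* Let $K\subseteq\mathbb{R}^d$ be a convex body, $\varepsilon>0$, $i\in I^\pm$, and let $\mathrm{Cap}_\varepsilon(p)(K_i^* )$ be any useful $\varepsilon$-cap induced by an augmented point $p\in\overline{\partial}K_i^*$. Then $\mathrm{Cap}_\varepsilon(p)(K_i^* )^\downarrow$ lies within a ball of radius $O(1)$ centered at the origin, where the constant depends only on $d$.
   Context: For a unit vector $u$, $H^+(u)$ is the closed supporting halfspace of $K$ with outer normal $u$. Let $e_1,\dots,e_d$ be the coordinate unit vectors, $e_{-j}=-e_j$, $I^\pm=\{\pm1,\dots,\pm d\}$, $V_i=\{u\in\mathbb{S}^{d-1}:\langle u,e_i\rangle\ge\langle u,e_j\rangle\ \forall j\in I^\pm,j\ne i\}$, $S_i=\bigcap_{u\in V_i}H^+(u)$. Fix $i$ and use orthonormal coordinates $(x_1,\dots,x_{d-1},y)$ in which $e_i$ is the upward $y$-direction and the $x$-coordinates are the remaining original coordinates (up to sign); $S^\downarrow$ is orthogonal projection onto $\{y=0\}\cong\mathbb{R}^{d-1}$, and $S\pm\varepsilon$ vertical translation. $K^\downarrow\oplus\alpha$ is the set of points of $\{y=0\}$ within distance $\alpha$ of $K^\downarrow$; $K_i^{(\alpha)}=\{x\in S_i:x^\downarrow\in K^\downarrow\oplus\alpha\}$, $K_i=K_i^{(2\varepsilon)}$. For a closed convex set $U$ in which every upward vertical ray from a boundary point lies in $U$ (U-shaped), $\overline{\partial}U$ is the set of boundary points with a non-vertical supporting hyperplane, each point augmented by a choice $h(q)$ of such a hyperplane. The projective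 dual of a point $p$ is the hyperplane $p^*:y=\sum_{j=1}^{d-1}p_jx_j-p_d$ (with $p^{**}=p$ for non-vertical hyperplanes); $K_i^*$ is the intersection of the closed upper halfspaces of $q^*$ for $q\in\overline{\partial}K_i$. The augmented point $q\in\overline{\partial}K_i$ with hyperplane $h(q)$ corresponds to $h(q)^*\in\overline{\partial}K_i^*$ with supporting hyperplane $q^*$. The $\varepsilon$-cap $\mathrm{Cap}_\varepsilon(p)(K_i^* )$ is the set of augmented points of $\overline{\partial}K_i^*$ in the closed lower halfspace of $h(p)+\varepsilon$. It is useful if $p$ corresponds to a point $q\in\overline{\partial}K_i$ lying on the lower boundary of $K_i^{(\varepsilon)}$. *)

(* Defs.v *)
From HB Require Import structures.
From mathcomp Require Import all_boot all_order all_algebra.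
From mathcomp Require Import reals.
Set Implicit Arguments. Unset Strict Implicit. Unset Printing Implicit Defensive.
Import Order.TTheory GRing.Theory Num.Theory.
Local Open Scope ring_scope.

Section Defs.
Variable R : realType.

Definition dot (m : nat) (u v : 'I_m -> R) : R := \sum_(j < m) u j * v j.
Definition sqdist (m : nat) (u v : 'I_m -> R) : R := dot (fun j => u j - v j) (fun j => u j - v j).
Definition enorm (m : nat) (u : 'I_m -> R) : R := Num.sqrt (dot u u).

Definition is_convex (m : nat) (K : ('I_m -> R) -> Prop) :=
  forall x y (t : R), K x -> K y -> 0 <= t -> t <= 1 ->
    K (fun j => (1 - t) * x j + t * y j).
Definition is_closed (m : nat) (K : ('I_m -> R) -> Prop) :=
  forall x, (forall e : R, 0 < e -> exists y, K y /\ sqdist x y < e) -> K x.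
Definition is_bounded (m : nat) (K : ('I_m -> R) -> Prop) :=
  exists M : R, forall x, K x -> dot x x <= M.
Definition has_interior (m : nat) (K : ('I_m -> R) -> Prop) :=
  exists (c : 'I_m -> R) (r : R), 0 < r /\ forall x, sqdist x c < r -> K x.
Definition convex_body (m : nat) (K : ('I_m -> R) -> Prop) :=
  [/\ is_convex K, is_closed K, is_bounded K & has_interior K].

(* (k, true) stands for +k (e_k), (k, false) for -k (e_{-k} = -e_k). *)
Definition sgnb (s : bool) : R := if s then 1 else -1.
Definition evec (m : nat) (i : 'I_m * bool) : 'I_m -> R :=
  fun j => if j == i.1 then sgnb i.2 else 0.

Definition Vdir (m : nat) (i : 'I_m * bool) (u : 'I_m -> R) : Prop :=
  dot u u = 1 /\ forall j : 'I_m * bool, j <> i -> dot u (evec j) <= dot u (evec i).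

(* closed supporting halfspace of K with outer normal u:
   { z | <u,z> <= sup_{x in K} <u,x> } *)
Definition Hplus (m : nat) (K : ('I_m -> R) -> Prop) (u : 'I_m -> R) (z : 'I_m -> R) : Prop :=
  forall t : R, (forall x, K x -> dot u x <= t) -> dot u z <= t.

Definition Sset (m : nat) (K : ('I_m -> R) -> Prop) (i : 'I_m * bool) (z : 'I_m -> R) : Prop :=
  forall u, Vdir i u -> Hplus K u z.

(* points / non-vertical hyperplane parameters in R^n x R *)
Definition pt (n : nat) := (('I_n -> R) * R)%type.

(* x-coordinates: remaining original coordinates; vertical coordinate
   y = - <z, e_i>. *)
Definition down (n : nat) (k : 'I_n.+1) (z : 'I_n.+1 -> R) : 'I_n -> R :=
  fun j => z (lift k j).
Definition to_orig (n : nat) (i : 'I_n.+1 * bool) (q : pt n) : 'I_n.+1 -> R :=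
  fun m => match unlift i.1 m with Some j => q.1 j | None => - sgnb i.2 * q.2 end.

(* K^down (+) alpha : points of {y=0} within distance alpha of K^down *)
Definition Kdown_thick (n : nat) (K : ('I_n.+1 -> R) -> Prop) (k : 'I_n.+1)
    (alpha : R) (w : 'I_n -> R) : Prop :=
  forall delta : R, 0 < delta ->
    exists z, K z /\ sqdist w (down k z) < (alpha + delta) ^+ 2.

Definition Ki_alpha (n : nat) (K : ('I_n.+1 -> R) -> Prop) (i : 'I_n.+1 * bool)
    (alpha : R) (q : pt n) : Prop :=
  Sset K i (to_orig i q) /\ Kdown_thick K i.1 alpha q.1.

(* hyperplane with parameters h = (a, b) :  y = <a, x> - b  (= the dual p^* of p = h) *)
Definition on_hp (n : nat) (h : pt n) (z : pt n) : Prop := z.2 = dot h.1 z.1 - h.2.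
Definition above_hp (n : nat) (h : pt n) (z : pt n) : Prop := dot h.1 z.1 - h.2 <= z.2.
Definition below_hp (n : nat) (h : pt n) (z : pt n) : Prop := z.2 <= dot h.1 z.1 - h.2.
Definition hp_shift (n : nat) (h : pt n) (eps : R) : pt n := (h.1, h.2 - eps).

(* augmented boundary: pairs (point q, non-vertical supporting hyperplane h(q)) *)
Definition aug_bd (n : nat) (U : pt n -> Prop) (q : pt n * pt n) : Prop :=
  [/\ U q.1, on_hp q.2 q.1 & forall z, U z -> above_hp q.2 z].

Definition dual_set (n : nat) (U : pt n -> Prop) (z : pt n) : Prop :=
  forall q, aug_bd U q -> above_hp q.1 z.

(* correspondence: q with h(q) |-> h(q)^* with supporting hyperplane q^* *)
Definition corr (n : nat) (q : pt n * pt n) : pt n * pt n := (q.2, q.1).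

Definition lower_bd (n : nat) (U : pt n -> Prop) (z : pt n) : Prop :=
  U z /\ forall y', y' < z.2 -> ~ U (z.1, y').

Definition Kset (n : nat) (K : ('I_n.+1 -> R) -> Prop) (i : 'I_n.+1 * bool) (eps : R) :=
  Ki_alpha K i (2 * eps).

Definition Kstar (n : nat) (K : ('I_n.+1 -> R) -> Prop) (i : 'I_n.+1 * bool) (eps : R) :=
  dual_set (Kset K i eps).

Definition Cap (n : nat) (K : ('I_n.+1 -> R) -> Prop) (i : 'I_n.+1 * bool) (eps : R)
    (p r : pt n * pt n) : Prop :=
  aug_bd (Kstar K i eps) r /\ below_hp (hp_shift p.2 eps) r.1.

Definition useful (n : nat) (K : ('I_n.+1 -> R) -> Prop) (i : 'I_n.+1 * bool) (eps : R)
    (p : pt n * pt n) : Prop :=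
  aug_bd (Kstar K i eps) p /\
  exists q, [/\ aug_bd (Kset K i eps) q, p = corr q & lower_bd (Ki_alpha K i eps) q.1].

End Defs.

(* Main.v *)
Require Import Defs.
From HB Require Import structures.
From mathcomp Require Import all_boot all_order all_algebra.
From mathcomp Require Import reals.
From mathcomp Require Import all_classical all_reals all_analysis.
From mathcomp Require Import ring lra.
Require Import Defs.
Import Order.TTheory GRing.Theory Num.Theory.
Import numFieldTopology.Exports numFieldNormedType.Exports.
Local Open Scope ring_scope.
Set Implicit Arguments. Unset Strict Implicit. Unset Printing Implicit Defensive.
Section Aux.
Variable R : realType.

Lemma dot_decomp n (k : 'I_n.+1) (u z : 'I_n.+1 -> R) :
  dot u z = u k * z k + dot (Defs.down k u) (Defs.down k z).
Proof. by rewrite /dot (bigD1_ord k) //. Qed.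

Lemma dotC m (u z : 'I_m -> R) : dot u z = dot z u.
Proof. by apply: eq_bigr => j _; rewrite mulrC. Qed.

Lemma dot_scale m (c : R) (u z : 'I_m -> R) :
  dot (fun j => c * u j) z = c * dot u z.
Proof. by rewrite /dot mulr_sumr; apply: eq_bigr => j _; rewrite mulrA. Qed.

Lemma dot_evec m (u : 'I_m -> R) (j : 'I_m * bool) :
  dot u (evec R j) = u j.1 * sgnb R j.2.
Proof.
rewrite /dot (bigD1 j.1) //= /evec eqxx big1 ?addr0 // => l /negbTE hl.
by rewrite hl mulr0.
Qed.

Lemma dot_bump m (x y : 'I_m -> R) (j : 'I_m) (c : R) :
  dot (fun l => x l + (if l == j then c else 0)) y = dot x y + c * y j.
Proof.
rewrite /dot -[X in _ = _ + X](_ : \sum_(l < m) (if l == j then c else 0) * y l = c * y j).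
  by rewrite -big_split /=; apply: eq_bigr => l _; rewrite mulrDl.
rewrite (bigD1 j) //= eqxx big1 ?addr0 // => l /negbTE ->; by rewrite mul0r.
Qed.

Lemma dot_ub m (u z : 'I_m -> R) : 2 * dot u z <= dot u u + dot z z.
Proof.
rewrite /dot mulr_sumr -big_split /=; apply: ler_sum => j _.
have := sqr_ge0 (u j - z j); rewrite sqrrB; lra.
Qed.

Lemma abs_le_sq (x : R) : `|x| <= 1 + x ^+ 2.
Proof.
case: (lerP 0 x) => h; [rewrite ger0_norm // | rewrite ltr0_norm //];
 rewrite expr2; nra.
Qed.

Lemma sum_abs_le m (w : 'I_m -> R) : \sum_j `|w j| <= m%:R + dot w w.
Proof.
have -> : m%:R = \sum_(j < m) (1 : R) by rewrite sumr_const card_ord.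
rewrite /dot -big_split /=; apply: ler_sum => j _.
by have := abs_le_sq (w j); rewrite expr2.
Qed.

Lemma dot_diff_le m (u u' w : 'I_m -> R) (d : R) :
  (forall j, `|u j - u' j| <= d) -> dot u w - dot u' w <= d * \sum_j `|w j|.
Proof.
move=> h; rewrite /dot -sumrB mulr_sumr; apply: ler_sum => j _.
rewrite -mulrBl; apply: le_trans (ler_norm _) _; rewrite normrM.
by apply: ler_wpM2r => //.
Qed.

Lemma dot_sq_ge0 m (w : 'I_m -> R) : 0 <= dot w w.
Proof. by apply: sumr_ge0 => j _; rewrite -expr2 sqr_ge0. Qed.

Lemma dot_term_le m (w : 'I_m -> R) j : w j ^+ 2 <= dot w w.
Proof.
rewrite /dot (bigD1 j) //= -expr2 lerDl; apply: sumr_ge0 => l _.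
by rewrite -expr2 sqr_ge0.
Qed.

Lemma sgnb_sq b : sgnb R b * sgnb R b = 1 :> R.
Proof. by case: b; rewrite /sgnb ?mulr1 ?mulrNN ?mulr1. Qed.

End Aux.
Section Main.
Variable R : realType.
Variable n : nat.
Variable K : ('I_n.+1 -> R) -> Prop.
Variable i : 'I_n.+1 * bool.
Variable M : R.
Hypothesis hM : forall x, K x -> dot x x <= M.
Hypothesis hne : exists z, K z.

Local Notation s := (sgnb R i.2).

Definition uvec (v : 'I_n -> R) : 'I_n.+1 -> R :=
  fun m => match unlift i.1 m with Some j => v j | None => s end.
Definition Gset (v : 'I_n -> R) : set R := [set t | exists z, K z /\ t = dot (uvec v) z].
Definition G v := sup (Gset v).

Lemma dot_uvec v z : dot (uvec v) z = s * z i.1 + dot v (Defs.down i.1 z).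
Proof.
rewrite (dot_decomp i.1) /uvec unlift_none; congr (_ + _).
by apply: eq_bigr => j _; rewrite /Defs.down liftK.
Qed.

Lemma dot_uvec_orig v q : dot (uvec v) (to_orig i q) = dot v q.1 - q.2.
Proof.
rewrite dot_uvec /to_orig unlift_none /=.
rewrite mulrA mulrN sgnb_sq mulN1r addrC.
congr (_ - _); apply: eq_bigr => j _; by rewrite /Defs.down liftK.
Qed.

Lemma Gub v : has_ubound (Gset v).
Proof.
exists ((dot (uvec v) (uvec v) + M) / 2) => t [z [Kz ->]].
have := dot_ub (uvec v) z; have := hM Kz; lra.
Qed.

Lemma G_upper v z : K z -> dot (uvec v) z <= G v.
Proof. by move=> Kz; apply: (ub_le_sup (Gub v)); exists z. Qed.

Lemma G_least v t : (forall z, K z -> dot (uvec v) z <= t) -> G v <= t.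
Proof.
move=> h; apply: ge_sup.
  by case: hne => z Kz; exists (dot (uvec v) z); exists z.
by move=> x [z [Kz ->]]; apply: h.
Qed.

Lemma G_lip v v' d : (forall j, `|v j - v' j| <= d) -> 0 <= d ->
  G v <= G v' + d * (n%:R + M).
Proof.
move=> hd d0; apply: G_least => z Kz.
rewrite dot_uvec.
have h1 := dot_diff_le (Defs.down i.1 z) hd.
have h2 := sum_abs_le (Defs.down i.1 z).
have h3 : dot (Defs.down i.1 z) (Defs.down i.1 z) <= M.
  apply: le_trans (hM Kz); rewrite (dot_decomp i.1 z z) lerDr -expr2 sqr_ge0 //.
have h4 := G_upper v' Kz; rewrite dot_uvec in h4.
have h5 : d * \sum_j `|Defs.down i.1 z j| <= d * (n%:R + M).
  by apply: ler_wpM2l => //; apply: le_trans h2 _; rewrite lerD2l.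
lra.
Qed.


Lemma uvec_k v : uvec v i.1 = s.
Proof. by rewrite /uvec unlift_none. Qed.
Lemma uvec_lift v l : uvec v (lift i.1 l) = v l.
Proof. by rewrite /uvec liftK. Qed.

Lemma sgnb_neg : sgnb R (~~ i.2) = - s.
Proof. by case: i.2; rewrite /sgnb ?opprK. Qed.

Lemma F1 v z : (forall j, `|v j| <= 1) -> Sset K i z -> dot (uvec v) z <= G v.
Proof.
move=> hv Sz.
pose uv := uvec v.
have Q : 1 <= dot uv uv.
  rewrite (dot_decomp i.1) /uv {1 2}/uvec unlift_none sgnb_sq lerDl; exact: dot_sq_ge0.
set N := Num.sqrt (dot uv uv).
have N0 : 0 < N by rewrite sqrtr_gt0; lra.
have NN : N ^+ 2 = dot uv uv by rewrite sqr_sqrtr //; lra.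
pose u := fun m => N^-1 * uv m.
have hVu : Vdir i u.
  split.
    rewrite /u dot_scale dotC dot_scale -NN; field; lra.
  move=> [j1 b] hne'; rewrite !dot_evec /u /uv /= uvec_k.
  have -> : N^-1 * s * s = N^-1 by rewrite -mulrA sgnb_sq mulr1.
  case: (unliftP i.1 j1) => [l ->|e1]; last rewrite e1 in hne' *.
    rewrite uvec_lift -mulrA -[X in _ <= X]mulr1 ler_pM2l ?invr_gt0 //.
    have := hv l; rewrite ler_norml => /andP [h1 h2].
    by case: b {hne'}; rewrite /sgnb ?mulr1 ?mulrN1 //; lra.
  have hb : b = ~~ i.2.
    case: (boolP (b == i.2)) => [/eqP e | ne].
      exfalso; apply: hne'; rewrite e; exact: esym (surjective_pairing i).
    by move: ne {hne'}; case: b; case: (i.2).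
  rewrite hb sgnb_neg uvec_k mulrN -mulrA sgnb_sq mulr1.
  have : 0 < N^-1 by rewrite invr_gt0. lra.
have := Sz u hVu (N^-1 * G v).
rewrite /u dot_scale ler_pM2l ?invr_gt0 //; apply => x Kx.
rewrite dot_scale ler_pM2l ?invr_gt0 //; exact: G_upper.
Qed.

Lemma F2 w : (forall v, (forall j, `|v j| <= 1) -> dot v w.1 - w.2 <= G v) ->
  Sset K i (to_orig i w).
Proof.
move=> H u [uu hu] t ht.
set mu := u i.1 * s.
have hl : forall l b, u (lift i.1 l) * sgnb R b <= mu.
  move=> l b; have := hu (lift i.1 l, b); rewrite !dot_evec /=; apply.
  move=> /(f_equal fst) /= e; move: (neq_lift i.1 l); by rewrite e eqxx.
have hk : - mu <= mu.
  have := hu (i.1, ~~ i.2); rewrite !dot_evec /= sgnb_neg mulrN; apply.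
  move=> /(f_equal snd) /=; by case: (i.2).
have hl1 : forall l, `|u (lift i.1 l)| <= mu.
  move=> l; rewrite ler_norml; have := hl l true; have := hl l false.
  rewrite /sgnb mulr1 mulrN1; lra.
have uk : u i.1 = mu * s by rewrite /mu -mulrA sgnb_sq mulr1.
have mu0 : 0 < mu.
  rewrite lt_neqAle; apply/andP; split; last by lra.
  apply/negP => /eqP mu0.
  have : dot u u = 0.
    rewrite (dot_decomp i.1) uk -mu0 mul0r mul0r add0r.
    apply: big1 => l _; have := hl1 l; rewrite -mu0 /Defs.down.
    by rewrite normr_le0 => /eqP ->; rewrite mul0r.
  by rewrite uu => /eqP; rewrite oner_eq0.
pose v := fun l : 'I_n => u (lift i.1 l) / mu.
have hv : forall l, `|v l| <= 1.
  move=> l; rewrite /v normrM (gtr0_norm (x:=mu^-1)) ?invr_gt0 // ler_pdivrMr // mul1r; exact: hl1.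
have hu' : forall x, dot u x = mu * dot (uvec v) x.
  move=> x; rewrite -dot_scale; apply: eq_bigr => m _; congr (_ * _).
  case: (unliftP i.1 m) => [l ->|->]; first by rewrite uvec_lift /v mulrC divfK // gt_eqF.
  by rewrite uvec_k uk.
have hG : G v <= t / mu.
  apply: G_least => x Kx; rewrite ler_pdivlMr // mulrC -hu'; exact: ht.
rewrite hu' dot_uvec_orig.
have := H v hv.
move=> h; apply: le_trans (ler_wpM2l (ltW mu0) (le_trans h hG)) _.
by rewrite mulrC divfK // gt_eqF.
Qed.

Lemma M_ge0 : 0 <= M.
Proof. case: hne => z Kz; apply: le_trans (hM Kz); exact: dot_sq_ge0. Qed.

Lemma F3 (x1 : 'I_n -> R) : exists2 vs : 'I_n -> R, (forall j, `|vs j| <= 1) &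
  forall v, (forall j, `|v j| <= 1) -> dot v x1 - G v <= dot vs x1 - G vs.
Proof.
pose Phi := fun V : 'rV[R]_n => dot (fun j => V ord0 j) x1 - G (fun j => V ord0 j).
pose A : set 'rV[R]_n := fun V => forall j, (`[-1, 1]%classic : set R) (V ord0 j).
have cA : compact A by exact: (@rV_compact R n (fun=> (`[-1, 1]%classic : set R)) (fun j => @segment_compact R (-1) 1)).
have A0 : (A !=set0)%classic.
  exists 0 => j /=; rewrite mxE in_itv /=; apply/andP; split => //; lra.
have cPhi : continuous Phi.
  move=> V; apply/(@cvgrPdist_lt _ _ _ _ (nbhs_filter V)) => e e0.
  pose L := \sum_j `|x1 j| + (n%:R + M).
  have L0 : 0 <= L.
    apply: addr_ge0; first by apply: sumr_ge0 => j _.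
    by apply: addr_ge0 => //; exact: M_ge0.
  pose d := e / (L + 1).
  have d0 : 0 < d by rewrite /d divr_gt0 //; lra.
  apply/nbhs_ballP; exists d => // t Bt.
  have hd : forall j, `|V ord0 j - t ord0 j| <= d.
    move=> j; apply: ltW; move: Bt; rewrite /ball /= => -[_ Bt]; have := Bt ord0 j; by rewrite /ball /=.
  have hd' : forall j, `|t ord0 j - V ord0 j| <= d by move=> j; rewrite distrC.
  have h1 := dot_diff_le x1 hd.
  have h2 := dot_diff_le x1 hd'.
  have h3 := G_lip hd (ltW d0).
  have h4 := G_lip hd' (ltW d0).
  have hdL : d * L < e.
    rewrite /d mulrAC ltr_pdivrMr; last lra.
    have : 0 <= e * L by apply: mulr_ge0 => //; exact: ltW.
    nra.
  rewrite /Phi ltr_norml; apply/andP; split.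
    rewrite /L mulrDr in hdL; lra.
  rewrite /L mulrDr in hdL; lra.
have [c cAc hmax] := EVT_max_rV A0 cA (@continuous_subspaceT _ _ A Phi cPhi).
have hc : forall j, `|c ord0 j| <= 1.
  move: cAc; rewrite inE => hc j; have := hc j; rewrite /= in_itv /= ler_norml; done.
exists (fun j => c ord0 j) => // v hv.
have := hmax (\row_j v j); rewrite /Phi.
have -> : (fun j => (\row_j v j) ord0 j) = v by apply/funext => j; rewrite mxE.
apply; rewrite inE => j /=; rewrite mxE in_itv /= -ler_norml; exact: hv.
Qed.

Lemma core (eps : R) (p r : pt R n * pt R n) : 0 < eps -> useful K i eps p ->
  Cap K i eps p r -> forall j, `|r.1.1 j| <= 2.
Proof.
move=> e0 [_ [q [hq hpq hlow]]] [[hr1 _ _] hbelow] j.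
case: hq => hq1 _ _.
case: hlow => [[_ hth] _].
rewrite hpq /below_hp /hp_shift /= in hbelow.
set a := r.1.1 in hbelow *; set b := r.1.2 in hbelow *.
set x0 := q.1.1 in hth hbelow *; set y0 := q.1.2 in hbelow.
pose sg : R := if 0 <= a j then 1 else -1.
pose c := eps * sg.
have sg2 : sg * sg = 1 by rewrite /sg; case: ifP => _; rewrite ?mulr1 ?mulrNN ?mulr1.
have cabs : `|c| = eps by rewrite /c normrM gtr0_norm // /sg; case: ifP => _; rewrite ?normrN normr1 mulr1.
pose x1 := fun l => x0 l + (if l == j then c else 0).
have [vs hvs hmax] := F3 x1.
pose y1 := dot vs x1 - G vs.
have Sw : Sset K i (to_orig i (x1, y1)).
  apply: F2 => v hv /=; have := hmax v hv; rewrite /y1; lra.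
have thick : Kdown_thick K i.1 (2 * eps) x1.
  move=> dl dl0; have [z [Kz hz]] := hth dl dl0.
  exists z; split => //.
  set w := Defs.down i.1 z in hz *.
  pose D := fun l => x0 l - w l.
  have e1 : sqdist x1 w = dot (fun l => D l + (if l == j then c else 0))
                                (fun l => D l + (if l == j then c else 0)).
    rewrite /sqdist /dot; apply: eq_bigr => l _; rewrite /x1 /D; congr (_ * _); ring.
  rewrite e1 dot_bump dotC dot_bump /= eqxx.
  have hS : dot D D < (eps + dl) ^+ 2 by [].
  have hDj := dot_term_le D j.
  have hD : `|D j| < eps + dl.
    rewrite ltNge; apply/negP => hge.
    have : (eps + dl) ^+ 2 <= `|D j| ^+ 2.
      rewrite !expr2; apply: ler_pM => //; lra.
    rewrite real_normK ?num_real //; lra.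
  have hcD : c * D j <= eps * `|D j|.
    by apply: le_trans (ler_norm _) _; rewrite normrM cabs.
  have hc2 : c * c = eps * eps by rewrite /c mulrACA sg2 mulr1.
  rewrite !expr2 in hS *; rewrite -expr2 in hc2.
  have : 0 <= `|D j| by [].
  nra.
have aug : aug_bd (Kset K i eps) ((x1, y1), (vs, G vs)).
  split => //=.
  move=> z [Sz _]; rewrite /above_hp /=.
  have := F1 hvs Sz; rewrite dot_uvec_orig.
  lra.
have := hr1 _ aug; rewrite /above_hp /=.
have hq0 := F1 hvs hq1.1; rewrite dot_uvec_orig -/x0 -/y0 in hq0.
have e1 : dot x1 a = dot x0 a + c * a j by rewrite /x1 dot_bump.
have e2 : dot vs x1 = dot vs x0 + c * vs j by rewrite dotC /x1 dot_bump dotC.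
rewrite -/a -/b /y1 e1 e2.
have := hvs j; rewrite ler_norml => /andP [v1 v2].
rewrite /c /sg; case: ifP => ha.
  rewrite ger0_norm // mulr1 => h; nra.
rewrite ltr0_norm ?ltNge ?ha //; rewrite mulrN1 => h; nra.
Qed.

End Main.

Lemma sqrt_le_1X (R : realType) (X : R) : 0 <= X -> Num.sqrt X <= 1 + X.
Proof.
move=> X0; have s0 := sqrtr_ge0 X; have sq := sqr_sqrtr X0.
case: (lerP (Num.sqrt X) 1) => h; first lra.
rewrite expr2 in sq; nra.
Qed.

Theorem lemma12 (R : realType) (n : nat) :
  exists C : R, forall (K : ('I_n.+1 -> R) -> Prop) (eps : R) (i : 'I_n.+1 * bool)
    (p r : pt R n * pt R n),
    convex_body K -> 0 < eps -> useful K i eps p -> Cap K i eps p r ->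
    enorm r.1.1 <= C.
Proof.
exists (1 + 4 * n%:R) => K eps i p r [_ _ [M hM] [c0 [r0 [r0p hint]]]] e0 hu hc.
have hne : exists z, K z.
  exists c0; apply: hint; rewrite /sqdist /dot big1 // => j _; by rewrite subrr mul0r.
have hj := core hM hne e0 hu hc.
rewrite /enorm; apply: le_trans (sqrt_le_1X (dot_sq_ge0 _)) _.
rewrite lerD2l.
have -> : 4 * n%:R = \sum_(j < n) (4 : R) by rewrite sumr_const card_ord mulr_natr.
apply: ler_sum => j _; have := hj j; rewrite ler_norml => /andP [h1 h2]; nra.
Qed.
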